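(* Let $G=(V,E)$ be a finite simple connected graph of order $n\geq 2$. Then $\alpha_0(S(G)) = n-\beta^*_0(G)$.
   Context: For a finite simple graph $G=(V,E)$, the splitting graph $S(G)$ is obtained from $G$ by adding, for each vertex $v\in V$, a new vertex $v'$, and joining $v'$ to a vertex $u\in V$ if and only if $uv\in E$ (the new vertices are pairwise non-adjacent; the edges of $G$ are kept). $\alpha_0(H)$ denotes the vertex cover number of a graph $H$ (minimum size of a set of vertices meeting every edge). For a graph $G$ of order $n\geq 2$, $\beta_0^*(G):=\max\{|S|-|N(S)| : S \text{ is an independent set of } G\}$, where $N(S)$ is the set of vertices of $G$ adjacent to some vertex of $S$ (the empty set counts as an independent set). *)

(* Defs.v *)
From mathcomp Require Import all_boot all_order all_algebra.
Set Implicit Arguments. Unset Strict Implicit. Unset Printing Implicit Defensive.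
Import Order.TTheory GRing.Theory Num.Theory.

Definition simple_graph (V : finType) (e : rel V) : Prop :=
  symmetric e /\ irreflexive e.

Definition connected_graph (V : finType) (e : rel V) : Prop :=
  forall x y : V, connect e x y.

(* Splitting graph S(G): vertices V + V, inl v = v, inr v = v'.
   Edges: original edges, plus v'--u iff uv in E. *)
Definition split_rel (V : finType) (e : rel V) : rel (V + V) :=
  fun a b =>
    match a, b with
    | inl u, inl v => e u v
    | inl u, inr v => e u v
    | inr u, inl v => e u v
    | inr _, inr _ => false
    end.

Definition is_vertex_cover (W : finType) (f : rel W) (C : {set W}) : bool :=
  [forall x : W, forall y : W, f x y ==> (x \in C) || (y \in C)].

(* vertex cover number: minimum size of a vertex cover (setT is one). *)
Definition vertex_cover_number (W : finType) (f : rel W) : nat :=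
  \big[minn/#|W|]_(C : {set W} | is_vertex_cover f C) #|C|.

Definition is_independent (V : finType) (e : rel V) (S : {set V}) : bool :=
  [forall x in S, forall y in S, ~~ e x y].

Definition nbhd (V : finType) (e : rel V) (S : {set V}) : {set V} :=
  [set y | [exists x in S, e x y]].

(* beta_0^*(G) = max over independent S of |S| - |N(S)| (integer-valued;
   the empty set gives 0, so 0 is a valid initial value). *)
Definition beta0_star (V : finType) (e : rel V) : int :=
  \big[Order.max/0%R]_(S : {set V} | is_independent e S)
     ((#|S|%:Z - #|nbhd e S|%:Z)%R).

(* Main.v *)
Require Import Defs.
From mathcomp Require Import all_boot all_order all_algebra.
From mathcomp Require Import zify.
Import Order.TTheory GRing.Theory Num.Theory.

Lemma card_sumset (V : finType) (C : {set V + V}) :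
  #|C| = #|[set u | inl u \in C]| + #|[set v | inr v \in C]|.
Proof.
have inlI : injective (@inl V V) by move=> a b [].
have inrI : injective (@inr V V) by move=> a b [].
set A := [set u | inl u \in C]; set B := [set v | inr v \in C].
have E : C = (inl @: A) :|: (inr @: B).
  apply/setP => -[u|u]; rewrite !inE.
  - rewrite mem_imset ?inE //; case: (inl u \in C) => //=.
    by symmetry; apply/negbTE/imsetP => -[w _].
  - rewrite mem_imset ?inE //; case: (inr u \in C); rewrite ?orbT ?orbF //=.
    by symmetry; apply/negbTE/imsetP => -[w _].
rewrite {1}E cardsU !card_imset //.
have -> : (inl @: A) :&: (inr @: B) = set0.
  apply/setP => x; rewrite !inE; apply/negbTE/negP => /andP [/imsetP [a _ ->] /imsetP [b _]] //.
by rewrite cards0 subn0.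
Qed.

Section Main.
Variables (V : finType) (e : rel V).
Hypothesis esym : symmetric e.

Definition coverS (S : {set V}) : {set V + V} :=
  [set x | match x with inl u => u \notin S | inr v => v \in nbhd e S end].

Lemma coverS_cover S : is_independent e S -> is_vertex_cover (split_rel e) (coverS S).
Proof.
move=> /forallP Hi; apply/forallP => x; apply/forallP => y; apply/implyP.
case: x => [u|u]; case: y => [v|v] //= Huv; rewrite !inE.
- case uS: (u \in S) => //=; case vS: (v \in S) => //=.
  by move: (Hi u); rewrite uS => /forallP /(_ v); rewrite vS Huv.
- case uS: (u \in S) => //=; apply/existsP; exists u; by rewrite uS.
- case vS: (v \in S); rewrite ?orbT //= orbF; apply/existsP; exists v; by rewrite vS esym.
Qed.

Lemma coverS_card S : #|coverS S| = #|V| - #|S| + #|nbhd e S|.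
Proof.
rewrite card_sumset -(cardsC S) addKn; congr (_ + _); apply: eq_card => u; by rewrite !inE.
Qed.


Lemma vcn_le C : is_vertex_cover (split_rel e) C -> vertex_cover_number (split_rel e) <= #|C|.
Proof.
move=> HC; have: C \in index_enum _ := mem_index_enum C.
rewrite /vertex_cover_number; elim: (index_enum _) => [|a s IH] //.
rewrite big_cons inE => /orP [/eqP <-|/IH H]; first by rewrite HC geq_minl.
case: ifP => // _; by rewrite geq_min H orbT.
Qed.

Lemma vcn_ge m : m <= #|{: V + V}| -> (forall C, is_vertex_cover (split_rel e) C -> m <= #|C|) ->
  m <= vertex_cover_number (split_rel e).
Proof.
move=> H1 H2; rewrite /vertex_cover_number.
by elim/big_ind: _ => // x y Hx Hy; rewrite leq_min Hx Hy.
Qed.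

Lemma beta_ge S : is_independent e S -> (#|S|%:Z - #|nbhd e S|%:Z <= beta0_star e)%R.
Proof.
move=> HS; have: S \in index_enum _ := mem_index_enum S.
rewrite /beta0_star; elim: (index_enum _) => [|a s IH] //.
rewrite big_cons inE => /orP [/eqP <-|/IH H]; first by rewrite HS le_max lexx.
case: ifP => // _; by rewrite le_max H orbT.
Qed.

Lemma beta_le (M : int) : (0 <= M)%R ->
  (forall S, is_independent e S -> (#|S|%:Z - #|nbhd e S|%:Z <= M)%R) ->
  (beta0_star e <= M)%R.
Proof.
move=> H1 H2; rewrite /beta0_star.
by elim/big_ind: _ => // x y Hx Hy; rewrite ge_max Hx Hy.
Qed.

Lemma indep_of_cover C : is_vertex_cover (split_rel e) C ->
  is_independent e [set u | inl u \notin C] /\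
  nbhd e [set u | inl u \notin C] \subset [set v | inr v \in C].
Proof.
move=> /forallP HC; split.
  apply/forallP => x; apply/implyP; rewrite inE => xC.
  apply/forallP => y; apply/implyP; rewrite inE => yC.
  apply/negP => exy; move: (HC (inl x)) => /forallP /(_ (inl y)) /=.
  by rewrite exy (negbTE xC) (negbTE yC).
apply/subsetP => y; rewrite !inE => /existsP [x /andP [xC exy]].
move: (HC (inl x)) => /forallP /(_ (inr y)) /=; rewrite inE in xC.
by rewrite exy (negbTE xC).
Qed.

End Main.
Arguments coverS_cover {V e} esym {S}. Arguments coverS_card {V e}. Arguments vcn_le {V e C}.
Arguments vcn_ge {V e}. Arguments beta_ge {V e S}. Arguments beta_le {V e}.
Arguments indep_of_cover {V e C}.

Theorem corollary1 (V : finType) (e : rel V) :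
  simple_graph e -> connected_graph e -> 2 <= #|V| ->
  ((vertex_cover_number (split_rel e))%:Z = #|V|%:Z - beta0_star e)%R.
Proof.
move=> [esym _] _ _.
have i0 : is_independent e set0 by apply/forallP => x; rewrite inE.
have vn : vertex_cover_number (split_rel e) <= #|V|.
  have := vcn_le (coverS_cover esym i0); rewrite coverS_card cards0 subn0.
  have -> : nbhd e set0 = set0 by apply/setP => y; rewrite !inE; apply/existsP => -[x]; rewrite inE.
  by rewrite cards0 addn0.
have b0 : (0 <= beta0_star e)%R.
  have := beta_ge i0; rewrite cards0.
  have -> : nbhd e set0 = set0 by apply/setP => y; rewrite !inE; apply/existsP => -[x]; rewrite inE.
  by rewrite cards0.
have L1 : (beta0_star e <= #|V|%:Z - (vertex_cover_number (split_rel e))%:Z)%R.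
  apply: beta_le; first by rewrite subr_ge0 lez_nat.
  move=> S HS; have := vcn_le (coverS_cover esym HS); rewrite coverS_card.
  have := subset_leq_card (subsetT S); rewrite cardsT => SV.
  move=> H; lia.
have L2 : (#|V|%:Z - beta0_star e <= (vertex_cover_number (split_rel e))%:Z)%R.
  case: (ltP (#|V|%:Z - beta0_star e)%R 0%R) => [/ltW H|H].
    by apply: le_trans H _.
  have [m Hm] : exists m : nat, ((#|V|%:Z - beta0_star e) = m%:Z)%R.
    exists `|(#|V|%:Z - beta0_star e)%R|%N; by rewrite gez0_abs.
  rewrite Hm lez_nat; apply: vcn_ge.
    rewrite card_sum; lia.
  move=> C HC; have [Hi Hs] := indep_of_cover HC.
  have h3 := beta_ge Hi; have h2 := subset_leq_card Hs; rewrite card_sumset.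
  have hc : #|[set u | inl u \in C]| + #|[set u | inl u \notin C]| = #|V|.
    rewrite -(cardsC [set u | inl u \notin C]) addnC; congr (_ + _); apply: eq_card => u; by rewrite !inE negbK.
  move: h2 h3 hc.
  set a := #|[set u | inl u \notin C]|; set b := #|nbhd e _|; set c := #|[set u | inl u \in C]|.
  set d := #|[set u | inr u \in C]|; set n := #|V| in Hm *.
  move=> h2 h3 hc; clearbody a b c d n.
  have k1 : (m%:Z <= n%:Z - a%:Z + b%:Z)%R.
    by rewrite -Hm -addrA lerD2l (addrC (- _)%R) -opprB lerN2.
  lia.
lia.
Qed.
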